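(* Let $f:\mathbb{R}^n\to\mathbb{R}$ be twice continuously differentiable, $m_{2s}$-restricted strongly convex and $M_{2s}$-restricted strongly smooth. Let $\gamma\le m_{2s}$ and $0<\eta\le 1/(4M_{2s})$. Let $\mathbf x^k\in\mathbb{R}^n$ be $s$-sparse, let $T_k\in\mathcal{T}(\mathbf x^k;\eta)$, and let $\mathbf d^k_N$ be the Newton direction at $(\mathbf x^k,T_k)$. Then $$\langle\nabla_{T_k}f(\mathbf x^k),(\mathbf d^k_N)_{T_k}\rangle\le-\gamma\|\mathbf d^k_N\|^2+\frac{1}{4\eta}\|\mathbf x^k_{T_k^c}\|^2.$$
   Context: Notation: $\|\mathbf x\|_0$ = number of nonzero entries; $s$-sparse means $\|\mathbf x\|_0\le s$; $\mathrm{supp}(\mathbf x)$ = indices of nonzero entries; for $T\subseteq\{1,\dots,n\}$, $T^c$ its complement, $\mathbf x_T$ the subvector indexed by $T$, $\nabla_T f(\mathbf x)=(\nabla f(\mathbf x))_T$, $\nabla^2_{T,J}f(\mathbf x)$ the submatrix of the Hessian with rows in $T$ and columns in $J$, $\nabla^2_T f=\nabla^2_{T,T}f$. $\mathcal{P}_s(\mathbf x)=\mathrm{argmin}_{\mathbf z}\{\|\mathbf x-\mathbf z\|:\|\mathbf z\|_0\le s\}$ (a set). $\mathcal{T}(\mathbf x;\eta)=\{T: |T|=s,\ T\supseteq\mathrm{supp}(\mathbf z)\text{ for some }\mathbf z\in\mathcal{P}_s(\mathbf x-\eta\nabla f(\mathbf x))\}$. For $s$-sparse $\mathbf x$ let $M_{2s}(\mathbf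 x)=\sup\{\langle\mathbf y,\nabla^2 f(\mathbf x)\mathbf y\rangle: |\mathrm{supp}(\mathbf x)\cup\mathrm{supp}(\mathbf y)|\le 2s,\ \|\mathbf y\|=1\}$ and $m_{2s}(\mathbf x)$ the corresponding infimum. $f$ is $M_{2s}$-restricted strongly smooth if there is a constant $M_{2s}>0$ with $M_{2s}(\mathbf x)\le M_{2s}$ for all $s$-sparse $\mathbf x$; $f$ is $m_{2s}$-restricted strongly convex if there is a constant $m_{2s}>0$ with $m_{2s}(\mathbf x)\ge m_{2s}$ for all $s$-sparse $\mathbf x$. The Newton direction $\mathbf d_N^k$ at $(\mathbf x^k,T_k)$ is defined by $\nabla^2_{T_k}f(\mathbf x^k)(\mathbf d^k_N)_{T_k}=\nabla^2_{T_k,T_k^c}f(\mathbf x^k)\mathbf x^k_{T_k^c}-\nabla_{T_k}f(\mathbf x^k)$ and $(\mathbf d^k_N)_{T_k^c}=-\mathbf x^k_{T_k^c}$. *)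

(* Defs.v *)
From HB Require Import structures.
From mathcomp Require Import all_boot all_order all_algebra.
From mathcomp Require Import all_classical all_reals all_analysis.
Set Implicit Arguments. Unset Strict Implicit. Unset Printing Implicit Defensive.
Import Order.TTheory GRing.Theory Num.Theory.
Import numFieldNormedType.Exports.
Local Open Scope ring_scope.

Section Defs.
Variables (R : realType) (n : nat).
Implicit Types (x y z d : 'rV[R]_n) (A : 'M[R]_n) (T : {set 'I_n}).

Definition supp x : {set 'I_n} := [set i | x 0 i != 0].
Definition sparse (s : nat) x := (#|supp x| <= s)%N.
Definition enorm x : R := Num.sqrt (\sum_i x 0 i ^+ 2).
Definition qform A y : R := \sum_i \sum_j y 0 i * A i j * y 0 j.

(* f (with Hessian map H) is M-restricted strongly smooth: M > 0 and
   M_{2s}(x) <= M for every s-sparse x (sup unfolded). *)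
Definition restricted_strongly_smooth (H : 'rV[R]_n -> 'M[R]_n) (s : nat) (M : R) :=
  0 < M /\ forall x, sparse s x -> forall y,
    (#|supp x :|: supp y| <= 2 * s)%N -> enorm y = 1 -> qform (H x) y <= M.
Definition restricted_strongly_convex (H : 'rV[R]_n -> 'M[R]_n) (s : nat) (m : R) :=
  0 < m /\ forall x, sparse s x -> forall y,
    (#|supp x :|: supp y| <= 2 * s)%N -> enorm y = 1 -> m <= qform (H x) y.

Definition in_Ps (s : nat) x z :=
  sparse s z /\ forall z', sparse s z' -> enorm (x - z) <= enorm (x - z').

Definition in_Tset (g : 'rV[R]_n -> 'rV[R]_n) (s : nat) x (eta : R) T :=
  #|T| = s /\ exists z, in_Ps s (x - eta *: g x) z /\ supp z \subset T.

Definition newton_dir (g : 'rV[R]_n -> 'rV[R]_n) (H : 'rV[R]_n -> 'M[R]_n) x T d :=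
  (forall i, i \in T -> \sum_(j in T) H x i j * d 0 j
                        = \sum_(j in ~: T) H x i j * x 0 j - g x 0 i) /\
  (forall i, i \notin T -> d 0 i = - x 0 i).

End Defs.

(* Main.v *)
Require Import Defs.
From HB Require Import structures.
From mathcomp Require Import all_boot all_order all_algebra.
From mathcomp Require Import all_classical all_reals all_analysis.
From mathcomp Require Import ring lra.
Import Order.TTheory GRing.Theory Num.Theory.
Import numFieldNormedType.Exports.
Local Open Scope ring_scope.

Lemma line_is_derive (R : realType) (V W : normedModType R) (F : V -> W) (p a : V) (u : R) :
  differentiable F (p + u *: a) ->
  is_derive u 1 (fun t : R => F (p + t *: a)) ('d F (p + u *: a) a).
Proof.
move=> dF.
have E : (fun h : R => h^-1 *: (((fun t : R => F (p + t *: a)) \o shift u) (h *: 1) - F (p + u *: a)))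
  = (fun h : R => h^-1 *: ((F \o shift (p + u *: a)) (h *: a) - F (p + u *: a))).
  apply/funext => h /=; congr (_ *: (F _ - _)).
  by rewrite /shift /= [h%:A]mulr1 scalerDl addrCA.
split.
  rewrite /derivable E; exact: diff_derivable.
by rewrite /derive E -deriveE.
Qed.

Arguments line_is_derive {R V W F} p a u.

Definition bil (R : realType) n (A : 'M[R]_n) (a b : 'rV[R]_n) : R :=
  \sum_i \sum_j a 0 i * A i j * b 0 j.
Arguments bil {R n}.

Lemma delta_mvt (R : realType) (n : nat) (f : 'rV[R]_n -> R)
  (g : 'rV[R]_n -> 'rV[R]_n) (H : 'rV[R]_n -> 'M[R]_n) :
  (forall x, differentiable f x) ->
  (forall x v, 'd f x v = \sum_i g x 0 i * v 0 i) ->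
  (forall x, differentiable g x) ->
  (forall x v, 'd g x v = (H x *m v^T)^T) ->
  forall x a b (s : R), 0 < s ->
  exists c, exists e, [/\ 0 < c < s, 0 < e < s &
   f (x + s *: b + s *: a) - f (x + s *: a) - (f (x + s *: b) - f x)
     = s * s * bil (H (x + c *: a + e *: b)) a b].
Proof.
move=> df hf dg hg x a b s s0.
pose phi u := f (x + s *: b + u *: a) - f (x + u *: a).
pose dphi u := \sum_i g (x + s *: b + u *: a) 0 i * a 0 i - \sum_i g (x + u *: a) 0 i * a 0 i.
have Dphi (u : R) : is_derive u 1 phi (dphi u).
  have := is_deriveB (line_is_derive (x + s *: b) a u (df _))
                     (line_is_derive x a u (df _)).
  move=> D.
  have E1 := hf (x + s *: b + u *: a) a.
  have E2 := hf (x + u *: a) a.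
  have e3 : 'd f (x + s *: b + u *: a) a - 'd f (x + u *: a) a = dphi u.
    by rewrite /dphi -E1 -E2.
  exact: (is_derive_eq D e3).
have [c cI Ec] : exists2 c, c \in `]0, s[ & phi s - phi 0 = dphi c * (s - 0).
  apply: MVT => //.
  apply: derivable_within_continuous => u _; exact: (@ex_derive _ _ _ _ _ _ _ (Dphi u)).
pose p := x + c *: a.
pose psi w := \sum_i a 0 i * g (p + w *: b) 0 i.
pose dpsi w := \sum_i a 0 i * \sum_j H (p + w *: b) i j * b 0 j.
have Dpsi (w : R) : is_derive w 1 psi (dpsi w).
  have DG := line_is_derive p b w (dg _).
  have Ei i : is_derive w 1 (fun t : R => g (p + t *: b) 0 i) (\sum_j H (p + w *: b) i j * b 0 j).
    have dv : derivable (fun t : R => g (p + t *: b)) w 1 by apply: ex_derive.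
    split; first by move/derivable_mxP: dv; apply.
    have := derive_mx dv; rewrite derive_val hg => /matrixP /(_ 0 i).
    by rewrite !mxE => <-; apply: eq_bigr => j _; rewrite !mxE.
  have := is_derive_sum (fun i => is_deriveZ (a 0 i) (Ei i)).
  rewrite fct_sumE.
  by move=> h; apply: h.
have [e eI Ee] : exists2 e, e \in `]0, s[ & psi s - psi 0 = dpsi e * (s - 0).
  apply: MVT => //.
  apply: derivable_within_continuous => u _; exact: (@ex_derive _ _ _ _ _ _ _ (Dpsi u)).
exists c, e; split.
- by move: cI; rewrite in_itv.
- by move: eI; rewrite in_itv.
have h1 : f (x + s *: b + s *: a) - f (x + s *: a) - (f (x + s *: b) - f x) = phi s - phi 0.
  by rewrite /phi !scale0r !addr0.
have h2 : dphi c = psi s - psi 0.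
  rewrite /dphi /psi /p scale0r addr0; congr (_ - _); apply: eq_bigr => i _;
    rewrite mulrC //.
  by rewrite addrAC.
have h3 : dpsi e = bil (H (x + c *: a + e *: b)) a b.
  rewrite /dpsi /bil; apply: eq_bigr => i _; rewrite mulr_sumr; apply: eq_bigr => j _.
  by rewrite mulrA.
by rewrite h1 Ec h2 Ee h3 !subr0 -mulrA mulrC.
Qed.

Lemma entry_cont (R : realType) m n (i : 'I_m) (j : 'I_n) : continuous (fun M : 'M[R]_(m, n) => M i j).
Proof.
move=> u A /nbhs_ballP[e /= e0 eA].
apply/nbhs_ballP; exists e => //= v [_ uv]; apply: eA.
exact: uv.
Qed.

Lemma bil_cont (R : realType) n (H : 'rV[R]_n -> 'M[R]_n) a b :
  continuous H -> continuous (fun y => bil (H y) a b).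
Proof.
move=> cH; rewrite /bil.
apply: continuous_big; first exact: add_continuous.
move=> i _; apply: continuous_big; first exact: add_continuous.
move=> j _ y.
apply: (@continuousM _ _ (fun x => a 0 i * H x i j) (fun _ => b 0 j)); last exact: cst_continuous.
apply: (@continuousM _ _ (fun _ => a 0 i) (fun x => H x i j)); first exact: cst_continuous.
exact: (@continuous_comp _ _ _ H (fun M => M i j) y (cH y) (@entry_cont R n n i j (H y))).
Qed.

Arguments bil_cont {R n H} a b.
Arguments delta_mvt {R n f g H}.

Lemma hess_sym (R : realType) (n : nat) (f : 'rV[R]_n -> R)
  (g : 'rV[R]_n -> 'rV[R]_n) (H : 'rV[R]_n -> 'M[R]_n) :
  (forall x, differentiable f x) ->
  (forall x v, 'd f x v = \sum_i g x 0 i * v 0 i) ->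
  (forall x, differentiable g x) ->
  (forall x v, 'd g x v = (H x *m v^T)^T) ->
  continuous H ->
  forall x a b, bil (H x) a b = bil (H x) b a.
Proof.
move=> df hf dg hg cH x a b.
pose F1 y := bil (H y) a b.
pose F2 y := bil (H y) b a.
have key : forall e : R, 0 < e -> `|F1 x - F2 x| < e + e.
  move=> e e0.
  have N1 : \forall t \near x, `|F1 x - F1 t| < e.
    have := bil_cont a b cH x.
    by move/cvgrPdist_lt/(_ e e0).
  have N2 : \forall t \near x, `|F2 x - F2 t| < e.
    by have := bil_cont b a cH x; move/cvgrPdist_lt/(_ e e0).
  have N12 := filterI N1 N2.
  have := proj1 (nbhs_ballP _ _) (N12 _).
  case=> r /= r0 Hr.
  pose s := r / (`|a| + `|b| + 1).
  have hab : 0 < `|a| + `|b| + 1 by rewrite ltr_wpDl // addr_ge0.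
  have s0 : 0 < s by rewrite divr_gt0.
  have inball : forall c e1, 0 < c < s -> 0 < e1 < s -> ball x r (x + c *: a + e1 *: b).
    move=> c e1 /andP[c0 cs] /andP[e10 e1s].
    rewrite -ball_normE /= -addrA opprD addrA subrr sub0r normrN.

    apply: (le_lt_trans (ler_normD _ _)).
    rewrite !mx_normZ (gtr0_norm c0) (gtr0_norm e10).
    apply: (@le_lt_trans _ _ (s * (`|a| + `|b|))).
      by rewrite mulrDr; apply: lerD; apply: ler_wpM2r => //; exact: ltW.
    rewrite /s mulrAC ltr_pdivrMr // ltr_pM2l //.
    by rewrite ltrDl.
  have [c [e1 [cI e1I E1]]] := delta_mvt df hf dg hg x a b s s0.
  have [c' [e' [cI' e'I E2]]] := delta_mvt df hf dg hg x b a s s0.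
  have Eq : F1 (x + c *: a + e1 *: b) = F2 (x + c' *: b + e' *: a).
    have ss : s * s != 0 by rewrite mulf_neq0 // gt_eqF.
    apply: (mulfI ss); rewrite /F1 /F2 -E1 -E2.
    rewrite [x + s *: b + s *: a]addrAC.
    lra.
  have [h1 _] := Hr _ (inball _ _ cI e1I).
  have [_ h2] := Hr _ (inball _ _ e'I cI').
  rewrite [x + e' *: a + c' *: b]addrAC in h2.
  rewrite -[F1 x](subrK (F1 (x + c *: a + e1 *: b))) Eq -addrA.
  apply: (le_lt_trans (ler_normD _ _)); apply: ltrD.
    by rewrite -Eq.
  by rewrite distrC.
have [E|hne] := eqVneq (F1 x) (F2 x); first exact: E.
have hp : 0 < `|F1 x - F2 x| by rewrite normr_gt0 subr_eq0.
have := key (`|F1 x - F2 x| / 4) (divr_gt0 hp (ltr0n _ 4)).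
move=> h; exfalso; lra.
Qed.

Definition nsq (R : realType) n (a : 'rV[R]_n) : R := \sum_i a 0 i ^+ 2.
Arguments nsq {R n}.

Lemma bil_quad (R : realType) n (A : 'M[R]_n) a b (k : R) :
  bil A (a - k *: b) (a - k *: b) =
  bil A a a - k * bil A a b - k * bil A b a + k ^+ 2 * bil A b b.
Proof.
rewrite /bil !mulr_sumr -!sumrB -big_split; apply: eq_bigr => i _.
rewrite !mulr_sumr -!sumrB -big_split; apply: eq_bigr => j _.
rewrite !mxE /=; ring.
Qed.

Lemma bil_subr (R : realType) n (A : 'M[R]_n) a b c :
  bil A a (b - c) = bil A a b - bil A a c.
Proof.
rewrite /bil -sumrB; apply: eq_bigr => i _.
rewrite -sumrB; apply: eq_bigr => j _.
rewrite !mxE; ring.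
Qed.

Lemma bil_scale (R : realType) n (A : 'M[R]_n) a (k : R) :
  bil A (k *: a) (k *: a) = k ^+ 2 * bil A a a.
Proof.
rewrite /bil mulr_sumr; apply: eq_bigr => i _.
rewrite mulr_sumr; apply: eq_bigr => j _.
rewrite !mxE; ring.
Qed.

Lemma nsq_ge0 (R : realType) n (a : 'rV[R]_n) : 0 <= nsq a.
Proof. by apply: sumr_ge0 => i _; exact: sqr_ge0. Qed.

Lemma nsq_eq0 (R : realType) n (a : 'rV[R]_n) : nsq a = 0 -> a = 0.
Proof.
move=> /eqP; rewrite psumr_eq0; last by move=> i _; exact: sqr_ge0.
move=> /allP H; apply/rowP => i; rewrite mxE.
have := H i (mem_index_enum i); rewrite /= sqrf_eq0 => /eqP //.
Qed.

Lemma nsq_scale (R : realType) n (a : 'rV[R]_n) (k : R) : nsq (k *: a) = k ^+ 2 * nsq a.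
Proof. rewrite /nsq mulr_sumr; apply: eq_bigr => i _; rewrite mxE; ring. Qed.

Lemma enorm_nsq (R : realType) n (a : 'rV[R]_n) : enorm a ^+ 2 = nsq a.
Proof. by rewrite /enorm sqr_sqrtr // nsq_ge0. Qed.

Arguments nsq_eq0 {R n a}.

(* homogeneity: bound via normalized vector *)
Lemma scale_bound (R : realType) n (A : 'M[R]_n) (w : 'rV[R]_n) (m M : R) :
  (forall y, supp y = supp w -> enorm y = 1 -> m <= bil A y y /\ bil A y y <= M) ->
  m * nsq w <= bil A w w /\ bil A w w <= M * nsq w.
Proof.
move=> hyp.
have [N0|Nn0] := eqVneq (nsq w) 0.
  rewrite N0; have -> := nsq_eq0 N0.
  have -> : bil A 0 0 = 0 by rewrite /bil big1 // => i _; rewrite big1 // => j _; rewrite !mxE !mul0r.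
  by rewrite !mulr0.
have Np : 0 < nsq w by rewrite lt_def Nn0 nsq_ge0.
pose r := Num.sqrt (nsq w).
have rp : 0 < r by rewrite sqrtr_gt0.
pose y := r^-1 *: w.
have r2 : r ^+ 2 = nsq w by rewrite sqr_sqrtr // nsq_ge0.
have sy : supp y = supp w.
  apply/setP => i; rewrite !inE mxE mulf_eq0 invr_eq0 negb_or gt_eqF //.
have ey : enorm y = 1.
  rewrite /enorm -/(nsq y) nsq_scale exprVn r2 mulVf; [exact: sqrtr1 | exact: Nn0].
have [h1 h2] := hyp y sy ey.
rewrite /y bil_scale exprVn r2 in h1 h2.
rewrite mulrC in h1 h2.
split.
  by rewrite -ler_pdivlMr.
by rewrite -ler_pdivrMr.
Qed.

Arguments hess_sym {R n f g H}.

Theorem lemma5 (R : realType) (n s : nat) (f : 'rV[R]_n -> R)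
  (g : 'rV[R]_n -> 'rV[R]_n) (H : 'rV[R]_n -> 'M[R]_n)
  (m M gamma eta : R) (xk dN : 'rV[R]_n) (Tk : {set 'I_n}) :
  (* f is C^2 with gradient g and Hessian H *)
  (forall x, differentiable f x) ->
  (forall x v, 'd f x v = \sum_i g x 0 i * v 0 i) ->
  (forall x, differentiable g x) ->
  (forall x v, 'd g x v = (H x *m v^T)^T) ->
  continuous H ->
  restricted_strongly_convex H s m ->
  restricted_strongly_smooth H s M ->
  gamma <= m -> 0 < eta -> eta <= 1 / (4 * M) ->
  sparse s xk -> in_Tset g s xk eta Tk -> newton_dir g H xk Tk dN ->
  \sum_(i in Tk) g xk 0 i * dN 0 i
    <= - gamma * enorm dN ^+ 2 + 1 / (4 * eta) * \sum_(i in ~: Tk) xk 0 i ^+ 2.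
Proof.
move=> df hf dg hg cH [m0 hconv] [M0 hsmooth] gm eta0 etaM sx [cardT _] [newt1 newt2].
have sym := hess_sym df hf dg hg cH xk.
set h := H xk in newt1 sym *.
pose u : 'rV[R]_n := \row_i (if i \in Tk then dN 0 i else 0).
pose v : 'rV[R]_n := \row_i (if i \in Tk then 0 else xk 0 i).
have duv : dN = u - v.
  apply/rowP => i; rewrite !mxE; case: ifP => hi; first by rewrite subr0.
  by rewrite sub0r newt2 ?hi.
have gT : forall i, i \in Tk -> g xk 0 i = - \sum_j h i j * dN 0 j.
  move=> i iT; rewrite (bigID (fun j => j \in Tk)) /= newt1 //.
  have -> : \sum_(j | j \notin Tk) h i j * dN 0 j = - \sum_(j in ~: Tk) h i j * xk 0 j.
    rewrite -sumrN; apply: eq_big => j; first by rewrite !inE.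
    by move=> jT; rewrite newt2 // mulrN.
  ring.
have LHS : \sum_(i in Tk) g xk 0 i * dN 0 i = - bil h u u + bil h u v.
  have E : bil h u dN = - \sum_(i in Tk) g xk 0 i * dN 0 i.
    rewrite /bil -sumrN (bigID (fun i => i \in Tk)) /=.
    rewrite [X in _ + X]big1 => [|i iT]; last first.
      by rewrite big1 // => j _; rewrite !mxE (negbTE iT) !mul0r.
    rewrite addr0; apply: eq_bigr => i iT.
    rewrite gT // mulNr opprK mulr_suml; apply: eq_bigr => j _.
    by rewrite !mxE iT; ring.
  rewrite {1}duv bil_subr in E; lra.
pose P (w : 'rV[R]_n) := forall i, i \notin Tk -> xk 0 i = 0 -> w 0 i = 0.
have bound : forall w, P w -> m * nsq w <= bil h w w /\ bil h w w <= M * nsq w.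
  move=> w Pw; apply: scale_bound => y sy ey.
  have card : (#|supp xk :|: supp y| <= 2 * s)%N.
    have sub : supp xk :|: supp y \subset Tk :|: supp xk.
      apply/fintype.subsetP => i; rewrite sy !inE; case/orP => [->|wi]; first by rewrite orbT.
      case: (boolP (i \in Tk)) => //= iT; apply/negP => /eqP x0.
      by rewrite (Pw i iT x0) eqxx in wi.
    apply: (leq_trans (subset_leq_card sub)); rewrite cardsU cardT.
    apply: (leq_trans (leq_subr _ _)); rewrite mul2n -addnn leq_add2l; exact: sx.
  split.
    exact: (hconv xk sx y card ey).
  exact: (hsmooth xk sx y card ey).
have Pu : P u by move=> i iT _; rewrite mxE (negbTE iT).
have Pv : P v by move=> i iT x0; rewrite mxE (negbTE iT).
pose w := u - (1/2) *: v.
have Pw : P w by move=> i iT x0; rewrite !mxE (negbTE iT) x0; ring.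
have [Bw _] := bound w Pw.
have [Cv Dv] := bound v Pv.
have nd : nsq dN = nsq u + nsq v.
  rewrite duv /nsq -big_split; apply: eq_bigr => i _; rewrite !mxE.
  by case: (i \in Tk) => /=; ring.
have nw : nsq w = nsq u + (1/2) ^+ 2 * nsq v.
  rewrite /nsq mulr_sumr -big_split; apply: eq_bigr => i _; rewrite !mxE.
  by case: (i \in Tk) => /=; ring.
have nv : \sum_(i in ~: Tk) xk 0 i ^+ 2 = nsq v.
  rewrite /nsq [RHS](bigID (fun i => i \in Tk)) /= [X in _ = X + _]big1 => [|i iT]; last by rewrite mxE iT expr0n.
  rewrite add0r; apply: eq_big => i; first by rewrite !inE.
  by move=> iT; rewrite mxE; move: iT; rewrite inE => /negbTE ->.
have qw : bil h w w = bil h u u - (1/2) * bil h u v - (1/2) * bil h v u + (1/2) ^+ 2 * bil h v v.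
  exact: bil_quad.
rewrite -(sym u v) in qw.
rewrite nw qw in Bw.
have nu0 := @nsq_ge0 R n u.
have nv0 := @nsq_ge0 R n v.
have hM : M <= 1 / (4 * eta).
  rewrite ler_pdivlMr ?mulr_gt0 //.
  move: etaM; rewrite ler_pdivlMr ?mulr_gt0 // => etaM.
  nra.
have K1 : M * nsq v <= 1 / (4 * eta) * nsq v by apply: ler_wpM2r.
have K2 : 0 <= (m - gamma) * nsq u by apply: mulr_ge0 => //; rewrite subr_ge0.
have K3 : 0 <= (m - gamma) * nsq v by apply: mulr_ge0 => //; rewrite subr_ge0.
rewrite LHS enorm_nsq nd nv.
lra.
Qed.
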